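(* For any $y,\bar y\in\mathbb R$, $$\|\nabla w_h(y)\|\le C_P\|f\|,\qquad \|w_h(y)\|\le e^{-y}\|f\|,$$ $$\|\nabla(w_h(y)-w_h(\bar y))\|\le C_P^3|e^y-e^{\bar y}|\,\|f\|,$$ $$\|w_h(y)-w_h(\bar y)\|\le e^{-y}|e^{y-\bar y}-1|\,\|f\|,$$ $$\|\nabla(w_h(y)-w_h(\bar y))\|\le\tfrac12e^{-y/2}|e^{y-\bar y}-1|\,\|f\|.$$
   Context: $\Omega\subset\mathbb R^d$, $d\in\{1,2,3\}$, is a bounded polyhedral domain and $\|\cdot\|$ is the $L^2(\Omega)$ norm. $C_P$ is the Poincaré constant: $\|v\|\le C_P\|\nabla v\|$ for all $v\in H_0^1(\Omega)$. $\mathbb V_h\subset H_0^1(\Omega)$ is the space of continuous piecewise linear finite element functions on a conforming shape-regular simplicial partition of $\Omega$. Let $f\in L^2(\Omega)$. For $y\in\mathbb R$, $w_h(y)\in\mathbb V_h$ is the unique solution of $\int_\Omega\nabla w_h(y)\cdot\nabla v_h+e^y\int_\Omega w_h(y)v_h=\int_\Omega fv_h$ for all $v_h\in\mathbb V_h$. *)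

(* Defs.v *)
From HB Require Import structures.
From mathcomp Require Import all_boot all_order all_algebra.
From mathcomp Require Import all_classical all_reals.
From mathcomp Require Import topology normedtype sequences exp.
Set Implicit Arguments. Unset Strict Implicit. Unset Printing Implicit Defensive.
Import Order.TTheory GRing.Theory Num.Theory.
Local Open Scope ring_scope.

(* U      : ambient real vector space (plays L^2(Omega));
   ip     : the L^2 inner product (symmetric, bilinear, positive semidefinite);
   Vh     : the finite element subspace V_h;
   a      : the Dirichlet form a(u,v) = \int grad u . grad v on V_h
            (symmetric, bilinear, nonnegative on V_h). *)

Definition sym_bilinear (R : realType) (U : lmodType R) (b : U -> U -> R) :=
  (forall u v, b u v = b v u) /\
  (forall (c : R) (u v w : U), b (c *: u + v) w = c * b u w + b v w).

Definition fe_subspace (R : realType) (U : lmodType R) (Vh : U -> Prop) :=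
  Vh 0 /\ (forall (c : R) (u v : U), Vh u -> Vh v -> Vh (c *: u + v)).

Definition fnorm (R : realType) (U : lmodType R) (b : U -> U -> R) (v : U) : R :=
  Num.sqrt (b v v).

(* Main.v *)
Require Import Defs.
From HB Require Import structures.
From mathcomp Require Import all_boot all_order all_algebra.
From mathcomp Require Import all_classical all_reals.
From mathcomp Require Import topology normedtype sequences exp.
From mathcomp Require Import ring lra.
Import Order.TTheory GRing.Theory Num.Theory.
Local Open Scope ring_scope.

Section Bil.
Context {R : realType} {U : lmodType R} {b : U -> U -> R}.
Hypothesis hb : sym_bilinear b.

Lemma bl0 w : b 0 w = 0.
Proof.
case: hb => _ h; have := h 1 0 0 w; rewrite scale1r !addr0 mul1r.
move=> e; have : b 0 w + b 0 w - b 0 w = b 0 w - b 0 w by rewrite -e.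
by rewrite addrK subrr.
Qed.

Lemma blZ c u w : b (c *: u) w = c * b u w.
Proof. case: hb => _ h; by have := h c u 0 w; rewrite addr0 bl0 addr0. Qed.

Lemma blD u v w : b (u + v) w = b u w + b v w.
Proof. case: hb => _ h; by have := h 1 u v w; rewrite scale1r mul1r. Qed.

Lemma blN u w : b (- u) w = - b u w.
Proof. by rewrite -scaleN1r blZ mulN1r. Qed.

Lemma blB u v w : b (u - v) w = b u w - b v w.
Proof. by rewrite blD blN. Qed.

Lemma brD u v w : b w (u + v) = b w u + b w v.
Proof. case: hb => s _; by rewrite s blD (s u) (s v). Qed.

Lemma brZ c u w : b w (c *: u) = c * b w u.
Proof. case: hb => s _; by rewrite s blZ s. Qed.

Lemma bexp s t u v : b (s *: u + t *: v) (s *: u + t *: v) =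
  s^+2 * b u u + 2 * s * t * b u v + t^+2 * b v v.
Proof.
case: hb => sy _.
rewrite blD !blZ !brD !brZ (sy v u); lra.
Qed.

Hypothesis psd : forall v, 0 <= b v v.

Lemma CS u v : b u v <= fnorm b u * fnorm b v.
Proof.
rewrite /fnorm.
set A := b u u; set C := b v v; set B := b u v.
have hA : 0 <= A := psd u. have hC : 0 <= C := psd v.
have pA := sqr_sqrtr hA. have pC := sqr_sqrtr hC.
have gA := sqrtr_ge0 A. have gC := sqrtr_ge0 C.
set p := Num.sqrt A in pA gA *; set q := Num.sqrt C in pC gC *.
have [pq0|pqpos] := eqVneq (p * q) 0.
  rewrite pq0.
  have [p0|q0] : p = 0 \/ q = 0.
    by move/eqP: pq0; rewrite mulf_eq0 => /orP [/eqP|/eqP]; [left|right].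
  - have A0 : A = 0 by rewrite -pA p0 expr0n.
    have := psd ((-(C+1)) *: u + B *: v); rewrite bexp -/A -/B -/C A0.
    move=> h; nra.
  - have C0 : C = 0 by rewrite -pC q0 expr0n.
    have := psd (B *: u + (-(A+1)) *: v); rewrite bexp -/A -/B -/C C0.
    move=> h; nra.
have pq : 0 < p * q by rewrite lt_def pqpos mulr_ge0.
have := psd (q *: u + (-p) *: v); rewrite bexp -/A -/B -/C -pA -pC => h.
nra.
Qed.

Lemma CSN u v : - b u v <= fnorm b u * fnorm b v.
Proof.
rewrite -blN.
have -> : fnorm b u = fnorm b (- u) by rewrite /fnorm blN (proj1 hb u) blN opprK.
exact: CS.
Qed.


Lemma fnorm_sq u : fnorm b u ^+ 2 = b u u.
Proof. exact: sqr_sqrtr. Qed.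
End Bil.
Lemma fnorm_ge0 {R : realType} {U : lmodType R} (b : U -> U -> R) u : 0 <= fnorm b u.
Proof. exact: sqrtr_ge0. Qed.


Lemma cancel_aux (R : realType) (k x q : R) :
  0 <= x -> 0 <= q -> k * x * x <= q * x -> k * x <= q.
Proof.
move=> x0 q0 h; have [->|xn] := eqVneq x 0; first by rewrite mulr0.
have xp : 0 < x by rewrite lt_def xn x0.
by rewrite -(ler_pM2r xp).
Qed.

Theorem lemma2p1 (R : realType) (U : lmodType R)
  (ip : U -> U -> R) (Vh : U -> Prop) (a : U -> U -> R)
  (CP : R) (f : U) (w : R -> U) :
  sym_bilinear ip -> (forall v, 0 <= ip v v) ->
  fe_subspace Vh ->
  sym_bilinear a -> (forall v, Vh v -> 0 <= a v v) ->
  (* Poincare inequality (restricted to V_h), C_P >= 0 *)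
  0 <= CP ->
  (forall v, Vh v -> fnorm ip v <= CP * fnorm a v) ->
  (* w_h(y) in V_h solves the discrete problem for every y *)
  (forall y, Vh (w y)) ->
  (forall y v, Vh v -> a (w y) v + expR y * ip (w y) v = ip f v) ->
  forall y ybar : R,
    [/\ fnorm a (w y) <= CP * fnorm ip f,
        fnorm ip (w y) <= expR (- y) * fnorm ip f,
        fnorm a (w y - w ybar) <= CP ^+ 3 * `|expR y - expR ybar| * fnorm ip f,
        fnorm ip (w y - w ybar)
          <= expR (- y) * `|expR (y - ybar) - 1| * fnorm ip f
      & fnorm a (w y - w ybar)
          <= 2^-1 * expR (- y / 2) * `|expR (y - ybar) - 1| * fnorm ip f].
Proof.
move=> hip pip [V0 VC] ha pa hCP P Vw eq y ybar.
have Nf0 := fnorm_ge0 ip f.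
have base z : fnorm a (w z) ^+ 2 + expR z * fnorm ip (w z) ^+ 2
              <= fnorm ip f * fnorm ip (w z).
  rewrite /fnorm sqr_sqrtr; last exact: pa.
  rewrite sqr_sqrtr // eq //.
  exact: (CS hip pip).
have Ea z : fnorm a (w z) <= CP * fnorm ip f.
  have := base z; have := P _ (Vw z).
  have := fnorm_ge0 a (w z); have := fnorm_ge0 ip (w z); have := expR_gt0 z.
  move=> hE hI hX hP hb.
  have h0 : fnorm a (w z) ^+ 2 <= fnorm ip f * fnorm ip (w z) by nra.
  have h1 : fnorm ip f * fnorm ip (w z) <= fnorm ip f * (CP * fnorm a (w z)).
    exact: ler_wpM2l.
  have h2 : fnorm a (w z) * fnorm a (w z) <= (CP * fnorm ip f) * fnorm a (w z).
    rewrite -expr2; lra.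
  have h3 : 0 <= CP * fnorm ip f by apply: mulr_ge0.
  nra.
have Ei z : fnorm ip (w z) <= expR (- z) * fnorm ip f.
  have := base z; have := fnorm_ge0 ip (w z); have := expR_gt0 z.
  rewrite expRN => hE hN hb.
  have h1 : expR z * fnorm ip (w z) <= fnorm ip f by nra.
  rewrite ler_pdivlMl //; lra.
set e := w y - w ybar.
have Ve : Vh e by rewrite /e -scaleN1r addrC; apply: VC.
set D := `|expR y - expR ybar|.
have key : fnorm a e ^+ 2 + expR y * fnorm ip e ^+ 2
           <= D * fnorm ip (w ybar) * fnorm ip e.
  rewrite /fnorm sqr_sqrtr; last exact: pa.
  rewrite sqr_sqrtr //.
  have e1 := eq y e Ve; have e2 := eq ybar e Ve.
  have ae : a e e = a (w y) e - a (w ybar) e by rewrite /e (blB ha).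
  have ie : ip e e = ip (w y) e - ip (w ybar) e by rewrite /e (blB hip).
  have : a e e + expR y * ip e e = (expR ybar - expR y) * ip (w ybar) e.
    rewrite ae ie; lra.
  move=> ->.
  have c1 := CS hip pip (w ybar) e; have c2 := CSN hip pip (w ybar) e. rewrite /fnorm in c1 c2.
  rewrite /D; case: (lerP 0 (expR y - expR ybar)) => s.
  - rewrite ger0_norm //; nra.
  - rewrite ltr0_norm //; nra.
have D0 : 0 <= D by rewrite /D normr_ge0.
have gAe := fnorm_ge0 a e; have gIe := fnorm_ge0 ip e.
have gIw := fnorm_ge0 ip (w ybar); have gAw := fnorm_ge0 a (w ybar).
have Ey := expR_gt0 y.
have hD : `|expR (y - ybar) - 1| = expR (- ybar) * D.
  rewrite /D -[X in _ = X * _]ger0_norm ?expR_ge0 // -normrM.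
  have k : expR (- ybar) * expR ybar = 1 by rewrite -expRD addNr expR0.
  congr `|_|; rewrite expRD mulrBr k; nra.
have Eyb := expR_gt0 (- ybar).
have Ei' := Ei ybar.
have inv1 : expR (- y) * expR y = 1 by rewrite -expRD addNr expR0.
split.
- exact: Ea.
- exact: Ei.
- have Pe := P _ Ve; have Pw := P _ (Vw ybar); have Aw := Ea ybar.
  have En : 0 <= expR y * fnorm ip e ^+ 2 by apply: mulr_ge0; [lra| apply: exprn_ge0].
  have k0 : fnorm a e ^+ 2 <= D * fnorm ip (w ybar) * fnorm ip e by lra.
  have k1 : D * fnorm ip (w ybar) * fnorm ip e <= D * (CP * fnorm a (w ybar)) * fnorm ip e.
    by apply: ler_wpM2r => //; apply: ler_wpM2l.
  have k2 : D * (CP * fnorm a (w ybar)) * fnorm ip e <= D * (CP * fnorm a (w ybar)) * (CP * fnorm a e).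
    by apply: ler_wpM2l => //; apply: mulr_ge0 => //; apply: mulr_ge0.
  have h1 : fnorm a e * fnorm a e <= (D * CP * CP * fnorm a (w ybar)) * fnorm a e.
    have -> : D * CP * CP * fnorm a (w ybar) * fnorm a e = D * (CP * fnorm a (w ybar)) * (CP * fnorm a e) by ring.
    rewrite -expr2; lra.
  have g : 0 <= D * CP * CP * fnorm a (w ybar) by repeat apply: mulr_ge0.
  have h2 : fnorm a e <= D * CP * CP * fnorm a (w ybar) by nra.
  have : D * CP * CP * fnorm a (w ybar) <= D * CP * CP * (CP * fnorm ip f).
    by apply: ler_wpM2l => //; repeat apply: mulr_ge0.
  move=> h3.
  have -> : CP ^+ 3 * D * fnorm ip f = D * CP * CP * (CP * fnorm ip f) by ring.
  lra.
- rewrite hD.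
  have h1 : expR y * fnorm ip e <= D * fnorm ip (w ybar).
    apply: cancel_aux => //; first by apply: mulr_ge0.
    have := sqr_ge0 (fnorm a e); rewrite !expr2 in key *; nra.
  have h2 : expR y * fnorm ip e <= D * (expR (- ybar) * fnorm ip f) by nra.
  have Emy := expR_gt0 (- y).
  have : fnorm ip e = expR (- y) * (expR y * fnorm ip e) by rewrite mulrA inv1 mul1r.
  move=> ->; nra.
- rewrite hD.
  set s := expR (y / 2).
  have ss : s * s = expR y by rewrite /s -expRD; congr expR; lra.
  have si : expR (- y / 2) * s = 1 by rewrite /s -expRD; rewrite -[1]expR0; congr expR; lra.
  have s0 : 0 < s := expR_gt0 _.
  set M := expR (- ybar) * fnorm ip f.
  have M0 : 0 <= M by rewrite mulr_ge0 ?expR_ge0.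
  have k1 : fnorm a e ^+ 2 + s * s * fnorm ip e ^+ 2 <= D * M * fnorm ip e.
    rewrite ss; apply: le_trans key _; rewrite -mulrA -[X in _ <= X]mulrA.
    apply: ler_wpM2l => //; apply: ler_wpM2r => //.
  have k2 : (2 * s * fnorm a e) ^+ 2 <= (D * M) ^+ 2.
    have q1 := sqr_ge0 (D * M - 2 * s * s * fnorm ip e).
    have q2 : 0 <= 4 * (s * s) by nra.
    have q3 := ler_wpM2l q2 k1.
    rewrite !expr2 in q1 q3 *; nra.
  have k3 : 2 * s * fnorm a e <= D * M.
    rewrite -ler_sqr ?nnegrE //; nra.
  have Ems := expR_gt0 (- y / 2).
  have : fnorm a e = 2^-1 * expR (- y / 2) * (2 * s * fnorm a e).
    have -> : 2^-1 * expR (- y / 2) * (2 * s * fnorm a e) = (2^-1 * 2) * (expR (- y / 2) * s) * fnorm a e by ring.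
    by rewrite si mulVf ?mul1r ?mulr1 // pnatr_eq0.
  move=> ->.
  have fin := ler_wpM2l (expR_ge0 (- y / 2)) k3.
  rewrite /M in fin; lra.
Qed.
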